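(* Every bipartite TRVG on $n$ vertices has at most $2n-2$ edges. Moreover, this bound is best possible for $n\ge 7$: for every $n\ge 7$ there exists a bipartite TRVG on $n$ vertices with exactly $2n-2$ edges.
   Context: A graph $G$ is a transparent rectangle visibility graph (TRVG) if its vertices can be represented by a collection of pairwise non-overlapping rectangles in the plane whose sides are parallel to the coordinate axes, one per vertex, such that two distinct vertices are adjacent if and only if there is a horizontal or a vertical line intersecting the interiors of both of their rectangles (other rectangles do not block visibility). *)

(* Defs.v *)
From Stdlib Require Import Reals.
From mathcomp Require Import all_boot.
Set Implicit Arguments. Unset Strict Implicit. Unset Printing Implicit Defensive.

Record rect := Rect { rx1 : R; rx2 : R; ry1 : R; ry2 : R }.

Definition rect_valid (r : rect) : Prop := Rlt (rx1 r) (rx2 r) /\ Rlt (ry1 r) (ry2 r).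

Definition in_interior (r : rect) (p : R * R) : Prop :=
  (Rlt (rx1 r) p.1 /\ Rlt p.1 (rx2 r)) /\ (Rlt (ry1 r) p.2 /\ Rlt p.2 (ry2 r)).

Definition non_overlapping (r s : rect) : Prop :=
  ~ (exists p : R * R, in_interior r p /\ in_interior s p).

Definition hline_meets (t : R) (r : rect) : Prop :=
  exists x : R, in_interior r (x, t).
Definition vline_meets (t : R) (r : rect) : Prop :=
  exists y : R, in_interior r (t, y).

Definition tvisible (r s : rect) : Prop :=
  (exists t : R, hline_meets t r /\ hline_meets t s) \/
  (exists t : R, vline_meets t r /\ vline_meets t s).

Definition simple_graph (V : finType) (E : rel V) : Prop :=
  symmetric E /\ irreflexive E.

Definition is_TRVG (V : finType) (E : rel V) : Prop :=
  exists f : V -> rect,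
    (forall v, rect_valid (f v)) /\
    (forall u v, u <> v -> non_overlapping (f u) (f v)) /\
    (forall u v, u <> v -> (E u v <-> tvisible (f u) (f v))).

Definition bipartite (V : finType) (E : rel V) : Prop :=
  exists c : V -> bool, forall u v, E u v -> c u != c v.

Definition num_edges (V : finType) (E : rel V) : nat :=
  #|[set e : {set V} | [exists u, exists v, (e == [set u; v]) && E u v]]|.

(* Main.v *)
Require Import Defs.
From Stdlib Require Import Reals Lra ClassicalEpsilon.
From mathcomp Require Import all_boot.
Set Implicit Arguments. Unset Strict Implicit. Unset Printing Implicit Defensive.
From mathcomp Require Import zify.

Definition pb (P : Prop) : bool := if excluded_middle_informative P then true else false.
Lemma pbP (P : Prop) : reflect P (pb P).
Proof. rewrite /pb; case: excluded_middle_informative => h; constructor => //. Qed.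

Lemma dim_bound (V : finType) (E : rel V) (lo hi : V -> R) (x0 : V) :
  (forall u v, u != v -> Rlt (lo u) (hi v) -> Rlt (lo v) (hi u) -> E u v) ->
  (forall u v w, E u v -> E u w -> E v w -> False) ->
  exists (h : V -> {set V}) (m : V), forall u v, u != v -> Rlt (lo u) (hi v) -> Rlt (lo v) (hi u) ->
     exists2 w, w != m & [set u; v] = h w.
Proof.
move=> HE Htri.
pose bx (p w : V) := pb (Rlt (lo p) (lo w) \/ (lo p = lo w /\ (enum_rank p < enum_rank w)%N)).
have bx_irr : forall p, ~~ bx p p.
  move=> p; apply/pbP => -[|[_]]; [lra| by rewrite ltnn].
have bx_tr : forall p q w, bx p q -> bx q w -> bx p w.
  move=> p q w /pbP h1 /pbP h2; apply/pbP.
  case: h1 => [h1|[h1 h1']]; case: h2 => [h2|[h2 h2']].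
  - left; lra.
  - left; lra.
  - left; lra.
  - right; split; [lra | exact: ltn_trans h1' h2'].
have bx_tot : forall p w, p != w -> bx p w || bx w p.
  move=> p w ne; case: (Rtotal_order (lo p) (lo w)) => [h|[h|h]].
  - by apply/orP; left; apply/pbP; left.
  - have : enum_rank p != enum_rank w by apply: contra ne => /eqP/enum_rank_inj ->.
    rewrite neq_ltn => /orP[r|r]; apply/orP; [left|right]; apply/pbP; right; split => //; lra.
  - by apply/orP; right; apply/pbP; left.
have bx_le : forall p w, bx p w -> Rle (lo p) (lo w).
  by move=> p w /pbP [h|[h _]]; lra.
pose ovb (p w : V) := pb (Rlt (lo p) (hi w) /\ Rlt (lo w) (hi p)).
pose h (w : V) := if [pick p | bx p w && ovb p w] is Some p then [set w; p] else set0.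
pose cnt (w : V) := #|[set p | bx p w]|.
pose m := [arg min_(w < x0) cnt w].
have mmin : forall p, ~~ bx p m.
  move=> p; apply/negP => hp.
  move: hp; rewrite /m; case: (@arg_minnP _ x0 predT cnt isT) => w _ hw hp.
  have := hw p isT; rewrite leqNgt => /negP; apply.
  apply: proper_card; apply/properP; split.
  - apply/subsetP => q; rewrite !inE => hq; exact: bx_tr hq hp.
  - by exists p; rewrite !inE ?hp ?bx_irr.
exists h, m => u v ne h1 h2.
have key : forall p w, bx p w -> Rlt (lo p) (hi w) -> Rlt (lo w) (hi p) -> exists2 w', w' != m & [set p; w] = h w'.
  move=> p w bpw k1 k2; exists w.
    by apply: contraTneq bpw => ->; rewrite (negbTE (mmin p)).
  rewrite /h; case: pickP => [p' /andP[bp' /pbP [k3 k4]]|].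
  - have -> : p' = p.
      apply/eqP; apply/negPn/negP => ne'.
      have nepw : p != w by apply: contraTneq bpw => ->; rewrite (negbTE (bx_irr w)).
      have nep'w : p' != w by apply: contraTneq bp' => ->; rewrite (negbTE (bx_irr w)).
      have l1 := bx_le _ _ bpw; have l2 := bx_le _ _ bp'.
      apply: (Htri w p p').
      + apply: HE; [by rewrite eq_sym| lra | lra].
      + apply: HE; [by rewrite eq_sym| lra | lra].
      + apply: HE; [by rewrite eq_sym | lra | lra].
    by rewrite setUC.
  - by move/(_ p); rewrite bpw /=; move/negbT/pbP; case; split.
case/orP: (bx_tot u v ne) => b.
- exact: key.
- by rewrite setUC; apply: key.
Qed.

Section Vis.
Local Open Scope R_scope.
Lemma vis_x (r s : rect) : rect_valid r -> rect_valid s ->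
  ((exists t, vline_meets t r /\ vline_meets t s) <-> (Rlt (rx1 r) (rx2 s) /\ Rlt (rx1 s) (rx2 r))).
Proof.
case: r => a b c d; case: s => a' b' c' d'; rewrite /rect_valid /vline_meets /in_interior /= => [[h1 h2] [h3 h4]].
split.
- by case=> t [[y [[? ?] _]] [y' [[? ?] _]]]; split; lra.
- case=> k1 k2.
  have [t ht] : exists t, Rlt a t /\ Rlt t b /\ Rlt a' t /\ Rlt t b'.
    case: (Rle_dec a a') => l1; case: (Rle_dec b b') => l2.
    + exists ((a' + b) / 2); lra.
    + exists ((a' + b') / 2); lra.
    + exists ((a + b) / 2); lra.
    + exists ((a + b') / 2); lra.
  exists t; split; [exists ((c + d) / 2) | exists ((c' + d') / 2)]; simpl; lra.
Qed.

Lemma vis_y (r s : rect) : rect_valid r -> rect_valid s ->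
  ((exists t, hline_meets t r /\ hline_meets t s) <-> (Rlt (ry1 r) (ry2 s) /\ Rlt (ry1 s) (ry2 r))).
Proof.
case: r => a b c d; case: s => a' b' c' d'; rewrite /rect_valid /hline_meets /in_interior /= => [[h1 h2] [h3 h4]].
split.
- by case=> t [[y [_ [? ?]]] [y' [_ [? ?]]]]; split; lra.
- case=> k1 k2.
  have [t ht] : exists t, Rlt c t /\ Rlt t d /\ Rlt c' t /\ Rlt t d'.
    case: (Rle_dec c c') => l1; case: (Rle_dec d d') => l2.
    + exists ((c' + d) / 2); lra.
    + exists ((c' + d') / 2); lra.
    + exists ((c + d) / 2); lra.
    + exists ((c + d') / 2); lra.
  exists t; split; [exists ((a + b) / 2) | exists ((a' + b') / 2)]; simpl; lra.
Qed.

End Vis.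

Lemma card_A (V : finType) (a b : V * bool) : a != b -> #|~: [set a; b]| = 2 * #|V| - 2.
Proof. by move=> ne; rewrite cardsCs setCK cards2 ne card_prod card_bool mulnC. Qed.

Lemma upper (V : finType) (E : rel V) :
  simple_graph E -> bipartite E -> is_TRVG E -> num_edges E <= 2 * #|V| - 2.
Proof.
case=> sym irr [c hc] [f [fv [fno fe]]].
case: (pickP (@predT V)) => [x0 _|none]; last first.
  rewrite /num_edges; set S := finset _; suff -> : S = set0 by rewrite cards0.
  apply/setP => e; rewrite !inE.
  by apply/negbTE/existsP => -[u]; have := none u.
have Htri : forall u v w, E u v -> E u w -> E v w -> False.
  move=> u v w h1 h2 h3; move: (hc _ _ h1) (hc _ _ h2) (hc _ _ h3).
  by case: (c u); case: (c v); case: (c w).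
have [hx [mx Hx]] := @dim_bound V E (fun v => rx1 (f v)) (fun v => rx2 (f v)) x0
  (fun u v ne a b => (fe u v (elimN eqP ne)).2 (or_intror ((vis_x (fv u) (fv v)).2 (conj a b)))) Htri.
have [hy [my Hy]] := @dim_bound V E (fun v => ry1 (f v)) (fun v => ry2 (f v)) x0
  (fun u v ne a b => (fe u v (elimN eqP ne)).2 (or_introl ((vis_y (fv u) (fv v)).2 (conj a b)))) Htri.
pose H (q : V * bool) := if q.2 then hx q.1 else hy q.1.
pose A := ~: [set (mx, true); (my, false)].
have sub : [set e : {set V} | [exists u, exists v, (e == [set u; v]) && E u v]] \subset H @: A.
  apply/subsetP => e; rewrite inE => /existsP[u /existsP[v /andP[/eqP -> Euv]]].
  have ne : u != v by apply: contraTneq Euv => ->; rewrite irr.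
  case: ((fe u v (elimN eqP ne)).1 Euv) => hh.
  - move/(vis_y (fv u) (fv v)): hh => [a b]; case: (Hy u v ne a b) => w wm ->.
    apply/imsetP; exists (w, false) => //.
    by rewrite !inE !xpair_eqE /= andbF /= andbT.
  - move/(vis_x (fv u) (fv v)): hh => [a b]; case: (Hx u v ne a b) => w wm ->.
    apply/imsetP; exists (w, true) => //.
    by rewrite !inE !xpair_eqE /= andbF /= andbT orbF.
rewrite /num_edges; apply: leq_trans (subset_leq_card sub) _.
by rewrite -(card_A (_ : (mx, true) != (my, false))) ?leq_imset_card // xpair_eqE andbF.
Qed.
Definition path7 := [:: 2; 5; 0; 3; 6; 1; 4].
Definition pos (i : nat) := nth 0 path7 i.
Definition Xn (N i : nat) : nat * nat :=
  if i < 7 then (2 * i, if i == 6 then 2 * N + 20 else 2 * i + 3) else (2 * i + 4, 2 * i + 6).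
Definition Yn (N i : nat) : nat * nat :=
  if i < 7 then (2 * pos i, if i == 4 then 2 * N + 20 else 2 * pos i + 3) else (2 * i + 4, 2 * i + 6).
Definition ovn (p q : nat * nat) := (p.1 < q.2) && (q.1 < p.2).
Definition col (i : nat) := if i < 7 then odd i else true.
Definition px (i : nat) := if i < 7 then i.-1 else 6.
Definition py (i : nat) := if i < 7 then pos (pos i).-1 else 4.
Definition ry (i : nat) := if i < 7 then pos i else i.

Ltac cases7 u :=
  let h := fresh "h" in
  case: (ltnP u 7) => h;
  [ (have : u = 0 \/ u = 1 \/ u = 2 \/ u = 3 \/ u = 4 \/ u = 5 \/ u = 6 by lia);
    move=> [?|[?|[?|[?|[?|[?|?]]]]]]; subst u; clear h
  | rewrite ?(ltnNge u 7) ?h /= ].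

Lemma F0 N u : 7 <= N -> u < N -> ((Xn N u).1 < (Xn N u).2) && ((Yn N u).1 < (Yn N u).2).
Proof. move=> hN hu; rewrite /Xn /Yn /pos; cases7 u; simpl; lia. Qed.

Lemma F1 N u v : 7 <= N -> u < N -> v < N -> u != v ->
  ~~ (ovn (Xn N u) (Xn N v) && ovn (Yn N u) (Yn N v)).
Proof. move=> hN hu hv ne; rewrite /ovn /Xn /Yn /pos; cases7 u; cases7 v; simpl; lia. Qed.

Lemma F2 N u v : 7 <= N -> u < N -> v < N -> u != v ->
  ovn (Xn N u) (Xn N v) || ovn (Yn N u) (Yn N v) -> col u != col v.
Proof. move=> hN hu hv ne; rewrite /ovn /Xn /Yn /pos /col; cases7 u; cases7 v; simpl; lia. Qed.

Lemma F3 N u : 7 <= N -> u < N -> u != 0 -> ovn (Xn N u) (Xn N (px u)) && (px u < u).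
Proof. move=> hN hu ne; rewrite /ovn /Xn /px; cases7 u; simpl; lia. Qed.

Lemma F4 N u : 7 <= N -> u < N -> u != 2 ->
  [&& ovn (Yn N u) (Yn N (py u)), ry (py u) < ry u & py u < N].
Proof. move=> hN hu ne; rewrite /ovn /Yn /py /ry /pos; cases7 u; simpl; lia. Qed.

Lemma ovnC p q : ovn p q = ovn q p.
Proof. by rewrite /ovn andbC. Qed.

Lemma ovR (p q : nat * nat) :
  (Rlt (INR p.1) (INR q.2) /\ Rlt (INR q.1) (INR p.2)) <-> ovn p q.
Proof.
rewrite /ovn; split.
- by case=> /INR_lt/ltP -> /INR_lt/ltP ->.
- by case/andP => /ltP/lt_INR h1 /ltP/lt_INR h2.
Qed.

Lemma pair_eq (T : finType) (w p w' p' : T) :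
  [set w; p] = [set w'; p'] -> w != p -> (w = w' /\ p = p') \/ (w = p' /\ p = w').
Proof.
move=> e ne.
have hw : w \in [set w'; p'] by rewrite -e !inE eqxx.
have hp : p \in [set w'; p'] by rewrite -e !inE eqxx orbT.
move: hw hp; rewrite !inE => /orP[/eqP a|/eqP a] /orP[/eqP b|/eqP b].
- by move: ne; rewrite a b eqxx.
- by left.
- by right.
- by move: ne; rewrite a b eqxx.
Qed.

Lemma lower n : 6 <= n -> exists E : rel 'I_n.+1,
  [/\ simple_graph E, bipartite E, is_TRVG E & num_edges E = 2 * n.+1 - 2].
Proof.
move=> hn; set N := n.+1.
have hN : 7 <= N by [].
pose E := fun u v : 'I_N => (u != v) && (ovn (Xn N u) (Xn N v) || ovn (Yn N u) (Yn N v)).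
have simpE : simple_graph E.
  split; first by move=> u v; rewrite /E eq_sym ovnC (ovnC (Yn N u)).
  by move=> u; rewrite /E eqxx.
have HE := upper simpE.
have bipE : bipartite E.
  by exists (fun u : 'I_N => col (nat_of_ord u)) => u v /andP[ne o]; apply: (F2 hN (ltn_ord u) (ltn_ord v)).
pose f := fun u : 'I_N => Rect (INR (Xn N u).1) (INR (Xn N u).2) (INR (Yn N u).1) (INR (Yn N u).2).
have fv : forall u, rect_valid (f u).
  move=> u; have /andP[a b] := F0 hN (ltn_ord u).
  by split; apply: lt_INR; apply/ltP.
have trvg : is_TRVG E.
  exists f; split => //; split => u v ne.
  - case=> p [[[a1 a2] [a3 a4]] [[b1 b2] [b3 b4]]].
    have ne' : (nat_of_ord u != nat_of_ord v) by rewrite val_eqE; apply/eqP.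
    have := F1 hN (ltn_ord u) (ltn_ord v) ne'.
    have ox : ovn (Xn N u) (Xn N v).
      by apply/ovR; rewrite /= in a1 a2 b1 b2 *; split; lra.
    have oy : ovn (Yn N u) (Yn N v).
      by apply/ovR; rewrite /= in a3 a4 b3 b4 *; split; lra.
    by rewrite ox oy.
  - rewrite /tvisible (vis_y (fv u) (fv v)) (vis_x (fv u) (fv v)) /E.
    have -> : (u != v) = true by apply/eqP.
    rewrite /= (ovR (Xn N u)) (ovR (Yn N u)).
    by rewrite orbC; split => [/orP|]; [|case=> a; apply/orP]; tauto.
exists E; split => //.
apply/eqP; rewrite eqn_leq; have := HE bipE trvg; rewrite card_ord => -> /=.
have o0 : nat_of_ord (inord 0 : 'I_N) = 0 by rewrite inordK.
have o2 : nat_of_ord (inord 2 : 'I_N) = 2 by rewrite inordK // (leq_trans _ hN).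
pose D := setC [set ((inord 0 : 'I_N), true); ((inord 2 : 'I_N), false)].
pose H (q : 'I_N * bool) := if q.2 then [set q.1; inord (px q.1)] else [set q.1; inord (py q.1)].
have inD : forall q, q \in D -> if q.2 then nat_of_ord q.1 != 0 else nat_of_ord q.1 != 2.
  move=> [w []]; rewrite !inE !xpair_eqE /= ?andbF ?andbT ?orbF /=.
  - by apply: contra => /eqP e; apply/eqP/val_inj; rewrite /= o0.
  - by apply: contra => /eqP e; apply/eqP/val_inj; rewrite /= o2.
have Hx : forall w : 'I_N, nat_of_ord w != 0 -> [/\ nat_of_ord (inord (px w) : 'I_N) = px w, px w < w,
     w != inord (px w) & ovn (Xn N w) (Xn N (inord (px w) : 'I_N))].
  move=> w w0; have /andP[a b] := F3 hN (ltn_ord w) w0.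
  have e : nat_of_ord (inord (px w) : 'I_N) = px w by rewrite inordK // (ltn_trans b).
  split => //; last by rewrite e.
  by rewrite -val_eqE /= e neq_ltn b orbT.
have Hy : forall w : 'I_N, nat_of_ord w != 2 -> [/\ nat_of_ord (inord (py w) : 'I_N) = py w, ry (py w) < ry w,
     w != inord (py w) & ovn (Yn N w) (Yn N (inord (py w) : 'I_N))].
  move=> w w0; have /and3P[a b c] := F4 hN (ltn_ord w) w0.
  have e : nat_of_ord (inord (py w) : 'I_N) = py w by rewrite inordK.
  split => //; last by rewrite e.
  by rewrite -val_eqE /= e; apply: contraTneq b => <-; rewrite ltnn.
have sub : H @: D \subset [set e : {set 'I_N} | [exists u, exists v, (e == [set u; v]) && E u v]].
  apply/subsetP => e /imsetP[[w b] /inD /= hq ->]; rewrite inE.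
  apply/existsP; exists w; case: b hq => /= hq.
  - have [_ _ ne ov] := Hx w hq.
    by apply/existsP; exists (inord (px w)); rewrite eqxx /E ne ov.
  - have [_ _ ne ov] := Hy w hq.
    by apply/existsP; exists (inord (py w)); rewrite eqxx /E ne ov orbT.
apply: leq_trans (subset_leq_card sub).
rewrite card_in_imset ?card_A ?card_ord ?xpair_eqE ?andbF //.
move=> [w b] [w' b'] /inD /= h1 /inD /= h2 /=.
have gen : forall (w w' p p' : 'I_N) (r : nat -> nat), [set w; p] = [set w'; p'] -> w != p ->
    r p < r w -> r p' < r w' -> w = w'.
  move=> x x' p p' r e ne l1 l2; case: (pair_eq e ne) => [[] //|[a c]].
  by subst; have := ltn_trans l1 l2; rewrite ltnn.
have cross : forall (w p w' p' : 'I_N), [set w; p] = [set w'; p'] -> w != p ->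
    ovn (Xn N w) (Xn N p) -> ovn (Yn N w') (Yn N p') -> False.
  move=> x p x' p' e ne a c.
  have ne' : nat_of_ord x != nat_of_ord p by rewrite val_eqE.
  have := F1 hN (ltn_ord x) (ltn_ord p) ne'.
  case: (pair_eq e ne) => [[e1 e2]|[e1 e2]]; subst x' p'; [by rewrite a c | by rewrite a ovnC c].
case: b h1 => h1; case: b' h2 => h2 e.
- have [a1 a2 a3 _] := Hx w h1; have [b1 b2 b3 _] := Hx w' h2.
  by rewrite (gen w w' _ _ id e a3) ?a1 ?b1.
- have [_ _ a3 a4] := Hx w h1; have [_ _ _ b4] := Hy w' h2.
  by case: (cross _ _ _ _ e a3 a4 b4).
- have [_ _ a3 a4] := Hy w h1; have [_ _ b3 b4] := Hx w' h2.
  by case: (cross _ _ _ _ (esym e) b3 b4 a4).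
- have [a1 a2 a3 _] := Hy w h1; have [b1 b2 b3 _] := Hy w' h2.
  by rewrite (gen w w' _ _ ry e a3) ?a1 ?b1.
Qed.

Theorem theorem2 :
  (forall (V : finType) (E : rel V),
      simple_graph E -> bipartite E -> is_TRVG E ->
      num_edges E <= 2 * #|V| - 2) /\
  (forall n : nat, 7 <= n ->
      exists E : rel 'I_n,
        [/\ simple_graph E, bipartite E, is_TRVG E & num_edges E = 2 * n - 2]).
Proof.
split; first exact: upper.
by case=> [//|n] hn; apply: lower.
Qed.
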